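(* Let $k$ be a field, $G$ a finite group of order $n$ with $1/n\in k$, and $\sigma\subseteq G$ a cyclic subgroup. Then the idempotent $e_\sigma\in R(\sigma)_{1/n}$ belongs to the kernel of the restriction homomorphism $R(\sigma)_{1/n}\to R(\sigma')_{1/n}$ for every proper subgroup $\sigma'\subsetneq\sigma$.
   Context: $R(H)$ is the representation ring of $H$ over $k$ and $(-)_{1/n}=-\otimes\mathbb{Z}[1/n]$. For a finite cyclic group $\rho$, define $e_{\mathrm{prim}}:=\prod_{\rho'}\bigl(1-\frac1{|\rho'|}\sum_{h\in\rho'}h\bigr)\in\mathbb{Z}[1/n][\rho]$, the product over the minimal nontrivial subgroups $\rho'$ of $\rho$. Let $l_0$ be obtained from $k$ by adjoining the $n$-th roots of unity, $\Gamma=\mathrm{Gal}(l_0/k)$, $\sigma^\vee:=\mathrm{Hom}(\sigma,l_0^\times)$. The element $e_{\mathrm{prim}}\in\mathbb{Z}[1/n][\sigma^\vee]$ is $\Gamma$-invariant, and $e_\sigma\in R(\sigma)_{1/n}$ is the idempotent corresponding to it under the isomorphisms $R(\sigma)_{1/n}\simeq R_{l_0}(\sigma)^\Gamma_{1/n}\simeq\mathbb{Z}[1/n][\sigma^\vee]^\Gamma$ (base change $-\otimes_kl_0$ followed by the character isomorphism). *)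

(* Defs.v *)
From HB Require Import structures.
From mathcomp Require Import all_boot all_order all_algebra all_fingroup all_solvable all_field all_character.
Set Implicit Arguments. Unset Strict Implicit. Unset Printing Implicit Defensive.
Import GRing.Theory.
Local Open Scope ring_scope.

(* Concrete model of the character group sigma^vee = Hom(sigma, l0^x),
   where z is a primitive n-th root of unity in l0 and n = |G|.
   Every hom sigma -> l0^x takes values in mu_n = {z^i : i < n}, so a
   character is encoded by an exponent function f : gT -> 'I_n,
   chi_f(g) = z ^+ f g, normalized to be 0 outside sigma. *)
Section Dual.
Variables (l0 : fieldType) (n : nat) (z : l0) (gT : finGroupType) (S : {set gT}).

Definition chtype := {ffun gT -> 'I_n}.

Definition chi (f : chtype) (g : gT) : l0 := z ^+ (f g).

Definition dual : {set chtype} :=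
  [set f : chtype | [forall x, (x \notin S) ==> (val (f x) == 0%N)] &&
    [forall x, forall y, ((x \in S) && (y \in S)) ==>
       (chi f (x * y)%g == chi f x * chi f y)]].

Definition chtriv (f : chtype) : bool := [forall g in S, chi f g == 1].

Definition chprod (f1 f2 h : chtype) : bool :=
  [forall g in S, chi f1 g * chi f2 g == chi h g].

(* the group ring Q[sigma^vee] (containing Z[1/n][sigma^vee]),
   elements are functions supported on dual *)
Definition gring := {ffun chtype -> rat}.

Definition gone : gring :=
  [ffun h => if (h \in dual) && chtriv h then 1 else 0].

Definition gdelta (x : chtype) : gring := [ffun h => if h == x then 1 else 0].

Definition gmul (a b : gring) : gring :=
  [ffun h => if h \in dual then
     \sum_(f1 in dual) \sum_(f2 in dual)
        (if chprod f1 f2 h then a f1 * b f2 else 0) else 0].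

Definition gsub (a b : gring) : gring := [ffun h => a h - b h].
Definition gscale (c : rat) (a : gring) : gring := [ffun h => c * a h].
Definition gsum (A : {set chtype}) : gring := [ffun h => \sum_(x in A) gdelta x h].

Definition is_subgrp (A : {set chtype}) : bool :=
  [&& A \subset dual, [exists f in A, chtriv f] &
     [forall f1 in A, forall f2 in A, forall h in dual,
        chprod f1 f2 h ==> (h \in A)]].

Definition nontriv (A : {set chtype}) : bool := [exists f in A, ~~ chtriv f].

Definition min_nontriv (A : {set chtype}) : bool :=
  [&& is_subgrp A, nontriv A &
     [forall B : {set chtype},
        [&& is_subgrp B, nontriv B & B \subset A] ==> (B == A)]].

Definition eprim : gring :=
  \big[gmul/gone]_(A : {set chtype} | min_nontriv A)
     gsub gone (gscale (#|A|%:R)^-1 (gsum A)).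

End Dual.

(* multiplicity of the one-dimensional representation chi_f in the
   l0-representation U of sigma: dimension of the chi_f-isotypic subspace *)
Definition mult (l0 : fieldType) (n : nat) (z : l0) (gT : finGroupType)
  (S : {group gT}) (d : nat) (U : mx_representation l0 S d) (f : chtype n gT) : nat :=
  \rank (\bigcap_(g in S) kermx (U g - (chi z f g)%:M))%MS.

(* Main.v *)
Require Import Defs.
From HB Require Import structures.
From mathcomp Require Import all_boot all_order all_algebra all_fingroup all_solvable all_field all_character.
From Stdlib Require Import Classical_Prop.
From mathcomp Require Import zify ring.
Import GRing.Theory.
Local Open Scope ring_scope.
Set Implicit Arguments. Unset Strict Implicit. Unset Printing Implicit Defensive.
Section LA.
Variable K : fieldType.

Definition peval n (A : 'M[K]_n) (p : {poly K}) : 'M_n :=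
  \sum_(i < size p) p`_i *: A ^+ i.

Lemma peval_widen n (A : 'M[K]_n) (p : {poly K}) m : (size p <= m)%N ->
  peval A p = \sum_(i < m) p`_i *: A ^+ i.
Proof.
move=> hm; rewrite /peval (big_ord_widen m (fun i => p`_i *: A ^+ i) hm).
rewrite big_mkcond /=; apply: eq_bigr => i _; case: ifP => // /negbT.
by rewrite -leqNgt => h; rewrite nth_default // scale0r.
Qed.

Lemma peval1 n (A : 'M[K]_n) : peval A 1 = 1.
Proof. by rewrite /peval size_poly1 big_ord1 coefC /= expr0 scale1r. Qed.

Lemma peval0 n (A : 'M[K]_n) : peval A 0 = 0.
Proof. by rewrite /peval size_poly0 big_ord0. Qed.

Lemma peval_horner n (A : 'M[K]_n.+1) p : horner_mx A p = peval A p.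
Proof.
rewrite -{1}[p]coefK poly_def raddf_sum /=; apply: eq_bigr => i _.
by rewrite linearZ /= rmorphXn /= horner_mx_X.
Qed.

Lemma powsim m n (T : 'M[K]_(m, n)) (A : 'M_n) (A' : 'M_m) :
  T *m A = A' *m T -> forall i, T *m A ^+ i = A' ^+ i *m T.
Proof.
move=> h; elim=> [|i IH]; first by rewrite !expr0 mulmx1 mul1mx.
by rewrite !exprSr -!mulmxE mulmxA IH -mulmxA h mulmxA.
Qed.

Lemma peval_sim m n (T : 'M[K]_(m, n)) (A : 'M_n) (A' : 'M_m) p :
  T *m A = A' *m T -> T *m peval A p = peval A' p *m T.
Proof.
move=> h; rewrite /peval mulmx_sumr mulmx_suml; apply: eq_bigr => i _.
by rewrite -scalemxAr -scalemxAl (powsim h).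
Qed.

Lemma row_peval n (A : 'M[K]_n) (v : 'rV_n) p :
  v *m peval A p = \sum_(i < size p) p`_i *: (v *m A ^+ i).
Proof. by rewrite /peval mulmx_sumr; apply: eq_bigr => i _; rewrite scalemxAr. Qed.

Lemma rank_ker_peval n (A : 'M[K]_n) p :
  (\rank (kermxpoly A p) + \rank (peval A p))%N = n.
Proof.
case: n A => [|n] A; first by rewrite !thinmx0 mxrank0.
rewrite /kermxpoly mxrank_ker peval_horner subnK //; exact: rank_leq_row.
Qed.

Definition msim m n (A : 'M[K]_m) (C : 'M[K]_n) :=
  exists B : 'M_(m, n), [/\ m = n, row_free B & A *m B = B *m C].

Lemma msim_sym m n (A : 'M[K]_m) (C : 'M[K]_n) : msim A C -> msim C A.
Proof.
case=> B [def_m fB hB]; move: A B fB hB; rewrite def_m => A B.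
rewrite row_free_unit => injB homB; exists (invmx B); split=> //.
  by rewrite row_free_unit unitmx_inv.
by apply: canRL (mulKmx injB) _; rewrite mulmxA -homB ?mulmxK.
Qed.

Lemma msim_trans m n p (A : 'M[K]_m) (B : 'M[K]_n) (C : 'M[K]_p) :
  msim A B -> msim B C -> msim A C.
Proof.
case=> [B1 [e1 f1 h1]] [B2 [e2 f2 h2]]; exists (B1 *m B2); split.
- by rewrite e1.
- by rewrite /row_free mxrankMfree // (eqP f1) e1.
by rewrite mulmxA h1 -!mulmxA h2.
Qed.

End LA.

Lemma map_peval (K L : fieldType) (f : {rmorphism K -> L}) n (A : 'M[K]_n) (p : {poly K}) :
  map_mx f (peval A p) = peval (map_mx f A) (map_poly f p).
Proof.
rewrite /peval size_map_poly raddf_sum; apply: eq_bigr => i _ /=.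
rewrite map_mxZ coef_map; congr (_ *: _).
elim: (nat_of_ord i) => [|j IH]; first by rewrite !expr0 map_mx1.
by rewrite !exprSr -!mulmxE map_mxM IH.
Qed.

Section LA2.
Variable K : fieldType.

Definition compm (p : {poly K}) : 'M[K]_((size p).-1) :=
  \matrix_(i < (size p).-1, j < (size p).-1)
    (if (i.+1 < (size p).-1)%N then ((j : nat) == i.+1)%:R
     else - (lead_coef p)^-1 * p`_j).

Lemma cyclic_block n (A : 'M[K]_n) (p : {poly K}) :
  (2 <= size p)%N -> ~~ row_free (peval A p) ->
  (forall q : {poly K}, (2 <= size q)%N -> (size q < size p)%N -> row_free (peval A q)) ->
  exists Mv : 'M_((size p).-1, n), row_free Mv /\ Mv *m A = compm p *m Mv.
Proof.
move=> hp2 hnf hmin.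
have /rowV0Pn [v /sub_kermxP vP vn0] : kermx (peval A p) != 0 by rewrite kermx_eq0.
set s := (size p).-1.
have hs : size p = s.+1 by rewrite /s prednK // ltnW.
pose Mv : 'M_(s, n) := \matrix_(i < s) (v *m A ^+ i).
exists Mv; split.
  rewrite -kermx_eq0; apply/rowV0P => u /sub_kermxP uM0.
  pose q : {poly K} := \poly_(j < s) (if insub j is Some jj then u 0 jj else 0).
  have qcoef (i : 'I_s) : q`_i = u 0 i by rewrite coef_poly ltn_ord valK.
  have hq : v *m peval A q = 0.
    rewrite -uM0 /peval mulmx_sumr (big_ord_widen s (fun i => v *m (q`_i *: A ^+ i)) (size_poly _ _)).
    rewrite big_mkcond /= mulmx_sum_row; apply: eq_bigr => i _.
    rewrite rowK -scalemxAr -qcoef; case: ifP => // /negbT; rewrite -leqNgt => hi.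
    by rewrite nth_default // !scale0r.
  have [q0|qn0] := eqVneq q 0.
    by apply/rowP => j; rewrite mxE -qcoef q0 coef0.
  exfalso; have szq : (size q <= s)%N by apply: size_poly.
  have [sq1|sq2] := leqP (size q) 1.
    have := size1_polyC sq1 => qC.
    move: hq; rewrite /peval; have -> : size q = 1%N.
      by apply/eqP; rewrite eqn_leq sq1 lt0n size_poly_eq0.
    rewrite big_ord1 expr0 -scalemxAr mulmx1 => /eqP; rewrite scaler_eq0 (negPf vn0) orbF.
    apply/negP; rewrite qC coefC /= -(inj_eq (@polyC_inj _)) -qC; exact: qn0.
  have := hmin q sq2; rewrite hs ltnS => /(_ szq) hfree.
  have hq' : v *m peval A q = 0 *m peval A q by rewrite mul0mx.
  by move: vn0; rewrite (row_free_inj hfree hq') eqxx.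
apply/row_matrixP => i; rewrite row_mul rowK row_mul [RHS]mulmx_sum_row.
case: (boolP (i.+1 < s)%N) => hi.
  rewrite (bigD1 (Ordinal hi)) //= big1 ?addr0.
    by rewrite !mxE /= eqxx hi scale1r rowK /= exprSr mulmxA.
  move=> j hj; rewrite !mxE hi; case: eqP => [hj'|]; last by rewrite scale0r.
  by move: hj; rewrite -(inj_eq val_inj) /= hj' eqxx.
have hi' : i.+1 = s by apply/eqP; rewrite eqn_leq ltn_ord leqNgt hi.
have lc0 : lead_coef p != 0 by rewrite lead_coef_eq0 -size_poly_eq0 hs.
move: vP; rewrite row_peval hs big_ord_recr /= => /eqP; rewrite addr_eq0 => /eqP hv.
have -> : v *m A ^+ i *m A = v *m A ^+ i.+1 by rewrite exprSr mulmxA.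
rewrite hi'.
have hlc : lead_coef p = p`_s by rewrite lead_coefE hs.
apply: (@scalerI _ _ (lead_coef p)) => //.
rewrite [in LHS]hlc -[p`_s *: _]opprK -hv scaler_sumr -sumrN.
apply: eq_bigr => j _; rewrite !mxE (negPf hi) rowK scalerA.
by rewrite mulrA mulrN mulfV // mulN1r scaleNr.
Qed.

End LA2.
Section LA3.
Variable K : fieldType.

Lemma mxexpD n (A : 'M[K]_n) i j : A ^+ i *m A ^+ j = A ^+ (i + j).
Proof. by rewrite exprD. Qed.
Lemma mxexpS n (A : 'M[K]_n) i : A *m A ^+ i = A ^+ i.+1.
Proof. by rewrite exprS. Qed.
Lemma mxexpSr n (A : 'M[K]_n) i : A ^+ i *m A = A ^+ i.+1.
Proof. by rewrite exprSr. Qed.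

Variable e : nat.
Hypothesis he : (e%:R : K) != 0.

Lemma split_stable n s (A : 'M[K]_n) (Mv : 'M_(s, n)) (Cm : 'M_s) :
  A ^+ e = 1 -> row_free Mv -> Mv *m A = Cm *m Mv ->
  exists r, exists R : 'M_(r, n), exists A2 : 'M_r,
    [/\ (s + r)%N = n, row_free R, (Mv :&: R = 0)%MS & R *m A = A2 *m R].
Proof.
move=> hAe fMv hMA.
have e0 : (0 < e)%N by rewrite lt0n; apply: contraNneq he => ->.
have [X hX] := row_freeP fMv.
pose P0 := X *m Mv.
pose T i := A ^+ (e - i) *m P0 *m A ^+ i.
pose pi := (e%:R)^-1 *: \sum_(i < e) T i.
have MA i : Mv *m A ^+ i = Cm ^+ i *m Mv by apply: powsim.
have Tsub i : (T i <= Mv)%MS.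
  by rewrite /T /P0 -!mulmxA MA !mulmxA submxMl.
have MT i : (i <= e)%N -> Mv *m T i = Mv.
  move=> hi; rewrite /T /P0 !mulmxA MA -(mulmxA _ Mv X) hX mulmx1 -MA.
  by rewrite -mulmxA mxexpD subnK // hAe mulmx1.
have Mpi : Mv *m pi = Mv.
  rewrite /pi -scalemxAr mulmx_sumr (eq_bigr (fun _ => Mv)); last first.
    by move=> i _; apply: MT; apply: ltnW.
  by rewrite sumr_const card_ord -scaler_nat scalerA mulVf // scale1r.
have pisub : (pi <= Mv)%MS.
  by rewrite /pi scalemx_sub // summx_sub // => i _; apply: Tsub.
have Api : A *m pi = pi *m A.
  rewrite /pi -scalemxAr -scalemxAl; congr (_ *: _).
  rewrite mulmx_sumr mulmx_suml.
  have hT i : (i < e)%N -> A *m T i.+1 = T i *m A.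
    move=> hi; rewrite /T !mulmxA mxexpS -subSn // subSS.
    by rewrite -!mulmxA mxexpSr.
  have [e' he'] : exists e', e = e'.+1 by exists e.-1; rewrite prednK.
  rewrite he' big_ord_recl big_ord_recr /=.
  have -> : A *m T 0%N = T e' *m A.
    rewrite -hT ?he' // /T -he' subnn subn0 expr0 mulmx1 hAe mul1mx.
    by rewrite mulmx1.
  rewrite addrC; congr (_ + _); apply: eq_bigr => i _.
  by rewrite /bump /= hT // he' ltnS ltnW.
pose M' := kermx pi.
exists (\rank M'), (row_base M'), (row_base M' *m A *m pinvmx (row_base M')).
have RM' : (row_base M' <= M')%MS by rewrite eq_row_base.
have RA : (row_base M' *m A <= row_base M')%MS.
  rewrite eq_row_base; apply/sub_kermxP.
  by rewrite -mulmxA Api mulmxA (sub_kermxP RM') mul0mx.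
have rpi : \rank pi = s.
  have Mpi' : (Mv <= pi)%MS by rewrite -{1}Mpi submxMl.
  have := mxrankS pisub; have := mxrankS Mpi'; rewrite (eqP fMv) => h1 h2.
  by apply/eqP; rewrite eqn_leq h1 h2.
split.
- by rewrite mxrank_ker rpi subnKC // -rpi rank_leq_col.
- exact: row_base_free.
- apply/eqP/rowV0P => w; rewrite sub_capmx => /andP [wM wR].
  have wpi : w *m pi = w by rewrite -(mulmxKpV wM) -mulmxA Mpi.
  by rewrite -wpi; apply/sub_kermxP; rewrite (submx_trans wR RM').
- by rewrite mulmxKpV.
Qed.

Lemma rank_split n s r (A : 'M[K]_n) (M1 : 'M_(s, n)) (R : 'M_(r, n))
    (A1 : 'M_s) (A2 : 'M_r) q :
  (s + r)%N = n -> row_free M1 -> row_free R -> (M1 :&: R = 0)%MS ->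
  M1 *m A = A1 *m M1 -> R *m A = A2 *m R ->
  \rank (peval A q) = (\rank (peval A1 q) + \rank (peval A2 q))%N.
Proof.
move=> hn fM fR cap0 h1 h2.
have rsum : \rank (M1 + R)%MS = n.
  by have := mxrank_sum_cap M1 R; rewrite cap0 mxrank0 addn0 (eqP fM) (eqP fR) hn.
have full : row_full (col_mx M1 R).
  by rewrite /row_full -(addsmxE M1 R) rsum.
rewrite -(eqmxMfull (peval A q) full) mul_col_mx.
rewrite -(addsmxE _ _) (peval_sim _ h1) (peval_sim _ h2).
have := mxrank_sum_cap (peval A1 q *m M1) (peval A2 q *m R).
have -> : (peval A1 q *m M1 :&: peval A2 q *m R = 0)%MS.
  by apply/eqP; rewrite -submx0 -cap0 capmxS // submxMl.
by rewrite mxrank0 addn0 !mxrankMfree.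
Qed.

End LA3.
Lemma minimal_ex (P : nat -> Prop) :
  (exists n, P n) -> exists n, P n /\ forall m, (m < n)%N -> ~ P m.
Proof.
case=> n Pn; suff: forall N n, (n <= N)%N -> P n -> exists n, P n /\ forall m, (m < n)%N -> ~ P m.
  by move/(_ n n (leqnn n) Pn).
elim=> [|N IH] k hk Pk.
  exists k; split => // m; rewrite (leqNgt) in hk.
  by move: hk; case: k {Pk} => //.
have [[m [hm Pm]]|nm] := classic (exists m, (m < k)%N /\ P m).
  by apply: (IH m) => //; rewrite -ltnS (leq_trans hm hk).
by exists k; split => // m hm Pm; apply: nm; exists m.
Qed.

Section LA4.
Variable K : fieldType.

Lemma peval_Xn1 n (A : 'M[K]_n) k : peval A ('X^k - 1) = A ^+ k - 1.
Proof.
case: n A => [|n] A; first by apply/matrixP => [[]].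
by rewrite -peval_horner rmorphB rmorphXn /= horner_mx_X rmorph1.
Qed.

Lemma msim0 n1 n2 (A : 'M[K]_n1) (C : 'M[K]_n2) :
  n1 = 0%N -> n2 = 0%N -> msim A C.
Proof.
move=> h1 h2; exists 0; split; first by rewrite h1 h2.
  by rewrite /row_free mxrank0 h1.
by rewrite mulmx0 mul0mx.
Qed.

Variable e : nat.
Hypothesis he : (e%:R : K) != 0.

Theorem sim_criterion N n1 (A : 'M[K]_n1) n2 (C : 'M[K]_n2) :
  (n1 <= N)%N -> A ^+ e = 1 -> C ^+ e = 1 ->
  (forall q, \rank (peval A q) = \rank (peval C q)) -> msim A C.
Proof.
elim: N n1 A n2 C => [|N IH] n1 A n2 C hN hA hC hr;
  have hn : n2 = n1 by (have := hr 1; rewrite !peval1 !mxrank1).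
  by apply: msim0 => //; [ |rewrite hn]; apply/eqP; rewrite -leqn0.
have [n10|n1pos] := posnP n1; first by apply: msim0; rewrite ?hn.
have e0 : (0 < e)%N by rewrite lt0n; apply: contraNneq he => ->.
have [k [[p [hpk [hp2 hnf]]] hk]] : exists k, (exists p : {poly K}, [/\ size p = k, (2 <= size p)%N & ~~ row_free (peval A p)]) /\ forall m, (m < k)%N -> ~ (exists p : {poly K}, [/\ size p = m, (2 <= size p)%N & ~~ row_free (peval A p)]).
  apply: minimal_ex; exists e.+1, ('X^e - 1).
  have hs : size ('X^e - 1 : {poly K}) = e.+1 by rewrite -polyC1 size_XnsubC.
  split => //; first by rewrite hs ltnS.
  by rewrite peval_Xn1 hA subrr /row_free mxrank0 eq_sym -lt0n n1pos.
have hmin (q : {poly K}) : (2 <= size q)%N -> (size q < size p)%N -> row_free (peval A q).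
  move=> h2 hlt; apply/negPn/negP => nf; apply: (hk (size q)); first by rewrite -hpk.
  by exists q.
have rfAC q : row_free (peval C q) = row_free (peval A q) by rewrite /row_free -hr hn.
have [MA [fMA hMA]] := cyclic_block hp2 hnf hmin.
have [MC [fMC hMC]] : exists Mv : 'M_((size p).-1, n2), row_free Mv /\ Mv *m C = compm p *m Mv.
  apply: cyclic_block => //; first by rewrite rfAC.
  by move=> q h2 hlt; rewrite rfAC hmin.
have [rA [RA [A2 [hsA fRA capA hRA]]]] := split_stable he hA fMA hMA.
have [rC [RC [C2 [hsC fRC capC hRC]]]] := split_stable he hC fMC hMC.
have hr2 q : \rank (peval A2 q) = \rank (peval C2 q).
  have := rank_split q hsA fMA fRA capA hMA hRA.
  have := rank_split q hsC fMC fRC capC hMC hRC.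
  by rewrite hr => -> /eqP; rewrite eqn_add2l => /eqP.
have pow2 (m n : nat) (R : 'M[K]_(m, n)) (X : 'M_n) (Y : 'M_m) : row_free R -> R *m X = Y *m R -> X ^+ e = 1 -> Y ^+ e = 1.
  move=> fR hR hX; have := powsim hR e; rewrite hX mulmx1 => h.
  by apply: (row_free_inj fR); rewrite mul1mx -h.
have hs1 : (0 < (size p).-1)%N by rewrite -ltnS prednK // ltnW.
have [B2 [eB2 fB2 hB2]] : msim A2 C2.
  apply: (IH _ _ _ _ _ (pow2 _ _ _ _ _ fRA hRA hA) (pow2 _ _ _ _ _ fRC hRC hC) hr2).
  by move: hsA hN hs1; clear; lia.
have colfree (s r m : nat) (M : 'M[K]_(s, m)) (R : 'M_(r, m)) : row_free M -> row_free R -> (M :&: R = 0)%MS -> row_free (col_mx M R).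
  move=> fM fR c0; rewrite /row_free -(addsmxE M R).
  by have := mxrank_sum_cap M R; rewrite c0 mxrank0 addn0 (eqP fM) (eqP fR) => ->.
have sA : msim A (block_mx (compm p) 0 0 A2).
  apply: msim_sym; exists (col_mx MA RA); split => //; first exact: colfree.
  by rewrite mul_block_col mul_col_mx hMA hRA !mul0mx addr0 add0r.
have sC : msim (block_mx (compm p) 0 0 C2) C.
  exists (col_mx MC RC); split => //; first exact: colfree.
  by rewrite mul_block_col mul_col_mx hMC hRC !mul0mx addr0 add0r.
apply: (msim_trans sA); apply: msim_trans sC.
exists (block_mx 1%:M 0 0 B2); split; first by rewrite eB2.
  by rewrite /row_free rank_diag_block_mx mxrank1 (eqP fB2).
by rewrite !mulmx_block !mulmx0 !mul0mx !addr0 !add0r mulmx1 mul1mx hB2.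
Qed.

End LA4.
Section Eig.
Variable F : fieldType.

Lemma kermxpoly_dvd n (U : 'M[F]_n) (p q : {poly F}) :
  (q %| p)%R -> (kermxpoly U q <= kermxpoly U p)%MS.
Proof.
case: n U => [|n] U; first by rewrite thinmx0 sub0mx.
move=> /dvdpP [r ->]; apply/sub_kermxP; rewrite mulrC rmorphM /= -mulmxE mulmxA.
by rewrite mulmx_ker mul0mx.
Qed.

Lemma eig_decomp N (U : 'M[F]_N) d (w : F) :
  d.-primitive_root w -> U ^+ d = 1 -> forall P : {poly F},
  \rank (kermxpoly U P) = (\sum_(j < d | root P (w ^+ j)) \rank (eigenspace U (w ^+ j)))%N.
Proof.
move=> hw hUd P.
case: N U hUd => [|N] U hUd.
  by rewrite thinmx0 mxrank0 big1 // => j _; rewrite thinmx0 mxrank0.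
have d0 := prim_order_gt0 hw.
pose S := [pred j : 'I_d | root P (w ^+ j)].
pose P1 := \prod_(j < d | S j) ('X - (w ^+ j)%:P).
pose R := \prod_(j < d | ~~ S j) ('X - (w ^+ j)%:P).
have hQ : P1 * R = 'X^d - 1.
  by rewrite -(factor_Xn_sub_1 hw) big_mkord (bigID S) /=.
have cop (I : pred 'I_d) : {in I &, forall i j : 'I_d, j != i -> coprimep ('X - (w ^+ i)%:P) ('X - (w ^+ j)%:P)}.
  move=> i j _ _ hji; rewrite coprimep_XsubC root_XsubC (eq_prim_root_expr hw).
  by rewrite !modn_small // -(inj_eq val_inj) in hji *.
have dir := mxdirect_sum_kermx U (cop S).
have eqP1 := kermxpoly_prod U (cop S).
have -> : \rank (kermxpoly U P) = \rank (kermxpoly U P1).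
  apply: (@eqmx_rank F N.+1 N.+1 N.+1); apply/andP; split; last first.
    rewrite eqP1; apply/sumsmx_subP => j Sj; apply: kermxpoly_dvd.
    by rewrite dvdp_XsubCl.
  have cPR : coprimep P R.
    apply: (big_ind (fun x => coprimep P x)); first exact: coprimep1.
      by move=> x y hx hy; rewrite coprimepMr hx.
    by move=> j /= nSj; rewrite coprimep_XsubC.
  have [[u1 u2] /= hb] := Bezout_eq1_coprimepP _ _ cPR.
  apply/sub_kermxP.
  have -> : horner_mx U P1 = horner_mx U (P1 * (u1 * P + u2 * R)) by rewrite hb mulr1.
  have -> : P1 * (u1 * P + u2 * R) = P * (P1 * u1) + (P1 * R) * u2 by ring.
  rewrite hQ rmorphD !rmorphM /= rmorphB rmorphXn /= horner_mx_X rmorph1 hUd subrr mul0r addr0.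
  by rewrite /kermxpoly -[_ * _]/(_ *m _) mulmxA mulmx_ker mul0mx.
rewrite eqP1 (mxdirectP dir) /=; apply: eq_bigr => j _.
by rewrite eigenspace_poly.
Qed.

End Eig.
Lemma modn_mul_trans a b d t n : a = b %[mod d] -> (n %| d * t)%N -> a * t = b * t %[mod n].
Proof.
move=> hab /dvdnP [k hk].
rewrite (divn_eq a d) (divn_eq b d) hab !mulnDl -!mulnA hk !mulnA.
by rewrite !modnMDl.
Qed.

Section DualTh.
Variables (l0 : fieldType) (z : l0) (gT : finGroupType) (G sigma : {group gT}) (g : gT).
Hypothesis hz : #|G|.-primitive_root z.
Hypothesis hsG : sigma \subset G.
Hypothesis hg : (sigma : {set gT}) = <[g]>%g.

Local Notation n := #|G|.
Local Notation D := (dual n z sigma).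
Local Notation d := #[g]%g.

Lemma n_gt0 : (0 < n)%N. Proof. exact: cardG_gt0. Qed.

Lemma g_in : g \in sigma. Proof. by rewrite hg cycle_id. Qed.

Lemma d_dvd : (d %| n)%N.
Proof. by apply: order_dvdG; apply: (subsetP hsG); exact: g_in. Qed.

Lemma d_gt0 : (0 < d)%N. Proof. exact: order_gt0. Qed.

Lemma zinj (a b : 'I_n) : z ^+ a = z ^+ b -> a = b.
Proof.
by move/eqP; rewrite (eq_prim_root_expr hz) !modn_small // => /eqP; apply: val_inj.
Qed.

Lemma z_neq0 a : z ^+ a != 0.
Proof.
apply: expf_neq0; apply/eqP => z0; have := prim_expr_order hz.
by rewrite z0 expr0n gtn_eqF ?n_gt0 //= => /eqP; rewrite eq_sym oner_eq0.
Qed.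

Lemma dual_out f x : f \in D -> x \notin sigma -> val (f x) = 0%N.
Proof.
rewrite inE => /andP [/forallP h _] hx; exact: (eqP (implyP (h x) hx)).
Qed.

Lemma dual_mul f x y : f \in D -> x \in sigma -> y \in sigma ->
  chi z f (x * y)%g = chi z f x * chi z f y.
Proof.
rewrite inE => /andP [_ /forallP h] hx hy.
by have /forallP /(_ y) /implyP := h x; rewrite hx hy => /(_ isT) /eqP.
Qed.

Lemma dualI (f : chtype n gT) :
  (forall x, x \notin sigma -> val (f x) = 0%N) ->
  (forall x y, x \in sigma -> y \in sigma -> chi z f (x * y)%g = chi z f x * chi z f y) ->
  f \in D.
Proof.
move=> h1 h2; rewrite inE; apply/andP; split; apply/forallP => x.
  by apply/implyP => hx; rewrite h1.
apply/forallP => y; apply/implyP => /andP [hx hy]; by rewrite h2.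
Qed.

Lemma dual_1 f : f \in D -> chi z f 1%g = 1.
Proof.
move=> fD; have := dual_mul fD (group1 sigma) (group1 sigma); rewrite mulg1.
move/eqP; rewrite -subr_eq0 -{1}(mulr1 (chi z f 1%g)) -mulrBr mulf_eq0.
rewrite (negPf (z_neq0 _)) /= subr_eq0 => /eqP <-; done.
Qed.

Lemma dual_X f i : f \in D -> chi z f (g ^+ i)%g = chi z f g ^+ i.
Proof.
move=> fD; elim: i => [|i IH]; first by rewrite expg0 expr0 dual_1.
by rewrite expgSr dual_mul ?groupX ?g_in // IH exprSr.
Qed.

Lemma dual_eq f1 f2 : f1 \in D -> f2 \in D ->
  (forall x, x \in sigma -> chi z f1 x = chi z f2 x) -> f1 = f2.
Proof.
move=> h1 h2 h; apply/ffunP => x; case: (boolP (x \in sigma)) => hx.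
  by apply: zinj; apply: h.
by apply: val_inj; rewrite !dual_out.
Qed.

Lemma dual_eqg f1 f2 : f1 \in D -> f2 \in D -> chi z f1 g = chi z f2 g -> f1 = f2.
Proof.
move=> h1 h2 h; apply: dual_eq => // x; rewrite hg => /cycleP [i ->].
by rewrite !dual_X // h.
Qed.

Definition idx (x : gT) : nat := find (fun i => g ^+ i == x)%g (iota 0 d).

Lemma idxP x : x \in sigma -> (g ^+ idx x)%g = x.
Proof.
rewrite hg => hx; have [i hi ->] := cyclePmin hx.
have hh : has (fun j => g ^+ j == g ^+ i)%g (iota 0 d).
  by apply/hasP; exists i; rewrite ?mem_iota //.
have := nth_find 0 hh; rewrite -/(idx _) nth_iota ?add0n; first by move/eqP.
by move: hh; rewrite has_find size_iota.
Qed.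

Lemma idx_mul x y : x \in sigma -> y \in sigma ->
  idx (x * y)%g = (idx x + idx y)%N %[mod d].
Proof.
move=> hx hy; apply/eqP; rewrite -eq_expg_mod_order expgD !idxP // groupM //.
Qed.

Lemma idx_g : idx g = 1%N %[mod d].
Proof. by apply/eqP; rewrite -eq_expg_mod_order expg1 idxP // g_in. Qed.

Definition mk (t : nat) : chtype n gT :=
  [ffun x => if x \in sigma then Ordinal (ltn_pmod (idx x * t) n_gt0)
             else Ordinal n_gt0].

Lemma mk_chi t x : x \in sigma -> chi z (mk t) x = z ^+ (idx x * t).
Proof. by move=> hx; rewrite /chi ffunE hx /= (prim_expr_mod hz). Qed.

Lemma mk_dual t : (n %| d * t)%N -> mk t \in D.
Proof.
move=> hdt; apply: dualI => [x hx|x y hx hy]; first by rewrite ffunE (negPf hx).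
rewrite !mk_chi ?groupM // -exprD -mulnDl; apply/eqP.
rewrite (eq_prim_root_expr hz); apply/eqP; apply: modn_mul_trans hdt.
exact: idx_mul.
Qed.

Lemma mk_g t : (n %| d * t)%N -> chi z (mk t) g = z ^+ t.
Proof.
move=> hdt; rewrite mk_chi ?g_in //; apply/eqP; rewrite (eq_prim_root_expr hz).
by rewrite -{2}[t]mul1n; apply/eqP; apply: modn_mul_trans hdt; exact: idx_g.
Qed.

Definition w := z ^+ (n %/ d).

Lemma w_prim : d.-primitive_root w.
Proof. rewrite /w; apply: (dvdn_prim_root hz); exact: d_dvd. Qed.

Definition phi (j : 'I_d) : chtype n gT := mk (j * (n %/ d)).

Lemma phi_div (j : nat) : (n %| d * (j * (n %/ d)))%N.
Proof. by rewrite mulnCA [(d * _)%N]mulnC divnK ?d_dvd // dvdn_mull. Qed.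

Lemma phi_dual j : phi j \in D.
Proof. exact: mk_dual (phi_div j). Qed.

Lemma phi_g j : chi z (phi j) g = w ^+ j.
Proof. by rewrite mk_g ?phi_div // /w -exprM mulnC. Qed.

Lemma phi_inj : injective phi.
Proof.
move=> i j h; have := phi_g i; rewrite h phi_g => /eqP.
rewrite (eq_prim_root_expr w_prim) !modn_small // => /eqP hij; apply: ord_inj; by rewrite hij.
Qed.

Lemma phi_onto f : f \in D -> exists j, f = phi j.
Proof.
move=> fD; have : chi z f g ^+ d = 1 by rewrite -dual_X // expg_order dual_1.
rewrite /chi -exprM => /eqP; rewrite -(prim_order_dvd hz) => hdiv.
set m := (n %/ d)%N.
have hn : n = (m * d)%N by rewrite divnK // d_dvd.
have hm : (m %| f g)%N.
  by rewrite -(@dvdn_pmul2r d) ?d_gt0 // -hn.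
have hj : ((f g) %/ m < d)%N.
  rewrite ltn_divLR; last by rewrite lt0n; apply/eqP => m0; move: hn; rewrite m0 mul0n => hn0; move: (n_gt0); rewrite hn0.
  by rewrite mulnC -hn ltn_ord.
exists (Ordinal hj); apply: dual_eqg => //; first exact: phi_dual.
by rewrite phi_g /w -exprM /= mulnC divnK // /chi.
Qed.

Lemma sum_dual (R : nmodType) (F : chtype n gT -> R) :
  \sum_(f in D) F f = \sum_(j < d) F (phi j).
Proof.
rewrite -(big_imset _ (in2W phi_inj)) /=; apply: eq_bigl => f.
apply/idP/imsetP => [fD|[j _ ->]]; last exact: phi_dual.
by have [j ->] := phi_onto fD; exists j.
Qed.

End DualTh.
Lemma kermxpoly_comp (F : fieldType) N (M : 'M[F]_N) (P : {poly F}) r :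
  kermxpoly (M ^+ r) P = kermxpoly M (P \Po 'X^r).
Proof.
case: N M => [|N] M; first by rewrite !thinmx0.
rewrite /kermxpoly; congr (kermx _).
rewrite comp_polyE raddf_sum peval_horner /peval; apply: eq_bigr => i _ /=.
by rewrite linearZ /= !rmorphXn /= horner_mx_X.
Qed.

Section MultTh.
Variables (l0 : fieldType) (z : l0) (gT : finGroupType) (G sigma : {group gT}) (g : gT).
Hypothesis hz : #|G|.-primitive_root z.
Hypothesis hsG : sigma \subset G.
Hypothesis hg : (sigma : {set gT}) = <[g]>%g.
Variables (N : nat) (Y : mx_representation l0 sigma N).

Local Notation n := #|G|.
Local Notation D := (dual n z sigma).
Local Notation d := #[g]%g.

Lemma repr_pow x i : x \in sigma -> Y (x ^+ i)%g = (Y x) ^+ i.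
Proof.
move=> hx; elim: i => [|i IH]; first by rewrite expg0 repr_mx1 expr0.
by rewrite expgSr repr_mxM ?groupX // IH exprSr.
Qed.

Lemma mult_eig f : f \in D -> mult z Y f = \rank (eigenspace (Y g) (chi z f g)).
Proof.
move=> fD; rewrite /mult /eigenspace; apply: eqmx_rank; apply/andP; split.
  by apply: (@bigcapmx_inf _ _ g) => //; apply: g_in hg.
apply/sub_bigcapmxP => x hx; have /cycleP [i hi] : x \in <[g]>%g by rewrite -hg.
rewrite hi.
set E := kermx _.
have hE : E *m Y g = chi z f g *: E.
  apply/eqP; rewrite -subr_eq0 -mul_mx_scalar -mulmxBr; apply/eqP; exact: mulmx_ker.
have hEi : E *m (Y g) ^+ i = (chi z f g) ^+ i *: E.
  clear hi hx; elim: i => [|i IH]; first by rewrite !expr0 mulmx1 scale1r.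
  by rewrite exprSr mulmxA IH -scalemxAl hE scalerA exprSr.
apply/sub_kermxP; rewrite mulmxBr repr_pow ?(g_in hg) // hEi (dual_X hz hg) //.
by rewrite mul_mx_scalar subrr.
Qed.

Lemma EQ h r (P : {poly l0}) : h = (g ^+ r)%g ->
  \rank (kermxpoly (Y h) P) =
  (\sum_(i < n | root P (z ^+ i)) \sum_(f in D | f h == i) mult z Y f)%N.
Proof.
move=> hh; rewrite hh repr_pow ?(g_in hg) // kermxpoly_comp.
have hUd : (Y g) ^+ d = 1 by rewrite -repr_pow ?(g_in hg) // expg_order repr_mx1.
rewrite (eig_decomp (w_prim hz hsG hg) hUd).
have hj (j : 'I_d) : (w z G g) ^+ j = chi z (phi G sigma j) g by rewrite (phi_g hz hsG hg).
transitivity (\sum_(f in D) (if root P (chi z f (g ^+ r)%g) then mult z Y f else 0))%N.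
  rewrite (sum_dual hz hsG hg) big_mkcond /=; apply: eq_bigr => j _.
  rewrite hj (mult_eig (phi_dual hz hsG hg j)) rootE horner_comp hornerXn.
  by rewrite -(dual_X hz hg) ?(phi_dual hz hsG hg) // -rootE.
rewrite -big_mkcondr /=.
rewrite (partition_big (fun f : chtype n gT => f (g ^+ r)%g) (fun i : 'I_n => root P (z ^+ i))) /=; last first.
  by move=> f /andP [_ ]; rewrite /chi.
apply: eq_bigr => i hi; apply: eq_bigl => f.
case: eqP => [hfi|_]; last by rewrite !andbF.
by rewrite /chi hfi hi !andbT.
Qed.

End MultTh.
Lemma mod_shift a b i n : (a < n)%N -> (b < n)%N -> (i < n)%N ->
  (((a + b) %% n == i) = (a == (i + (n - b)) %% n))%N.
Proof.
move=> ha hb hi; apply/eqP/eqP => [<-|->].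
  by rewrite modnDml -addnA (subnKC (ltnW hb)) modnDr modn_small.
by rewrite modnDml -addnA (subnK (ltnW hb)) modnDr modn_small.
Qed.

Lemma sum_delta (T : finType) (P : pred T) (x : T) (c : rat) :
  \sum_(f | P f) (if f == x then c else 0) = if P x then c else 0.
Proof.
rewrite big_mkcond (eq_bigr (fun f => if f == x then (if P x then c else 0) else 0)).
  by rewrite -big_mkcond big_pred1_eq.
by move=> f _; case: eqP => [->|]; case: (P _).
Qed.

Section EprimTh.
Variables (l0 : fieldType) (z : l0) (gT : finGroupType) (G sigma : {group gT}) (g : gT).
Hypothesis hz : #|G|.-primitive_root z.
Hypothesis hsG : sigma \subset G.
Hypothesis hg : (sigma : {set gT}) = <[g]>%g.
Variable h : gT.
Hypothesis hh : h \in sigma.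

Local Notation n := #|G|.
Local Notation D := (dual n z sigma).
Local Notation d := #[g]%g.
Local Notation Gr := (gring n gT).

Definition Qp (a : Gr) := forall i : 'I_n, \sum_(f in D | f h == i) a f = 0.

Definition mprod (f1 f2 : chtype n gT) : chtype n gT :=
  [ffun x => if x \in sigma then Ordinal (ltn_pmod (f1 x + f2 x) (n_gt0 G))
             else Ordinal (n_gt0 G)].

Lemma mprod_chi f1 f2 x : x \in sigma -> chi z (mprod f1 f2) x = chi z f1 x * chi z f2 x.
Proof. by move=> hx; rewrite /chi ffunE hx /= (prim_expr_mod hz) exprD. Qed.

Lemma mprod_dual f1 f2 : f1 \in D -> f2 \in D -> mprod f1 f2 \in D.
Proof.
move=> h1 h2; apply: dualI => [x hx|x y hx hy]; first by rewrite ffunE (negPf hx).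
by rewrite !mprod_chi ?groupM // !(dual_mul _ hx hy) // mulrACA.
Qed.

Lemma chprod_iff f1 f2 H : f1 \in D -> f2 \in D -> H \in D ->
  chprod z sigma f1 f2 H = (H == mprod f1 f2).
Proof.
move=> h1 h2 hH; apply/forallP/eqP => [hc|->].
  apply: (dual_eq hz hH (mprod_dual h1 h2)) => x hx.
  by rewrite mprod_chi //; have /implyP /(_ hx) /eqP := hc x.
by move=> x; apply/implyP => hx; rewrite mprod_chi.
Qed.

Lemma mprod_h f1 f2 : val (mprod f1 f2 h) = ((f1 h + f2 h) %% n)%N.
Proof. by rewrite ffunE hh. Qed.

Lemma inner_sum f1 f2 i (c : rat) : f1 \in D -> f2 \in D ->
  \sum_(H in D | H h == i) (if chprod z sigma f1 f2 H then c else 0) =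
  if ((f1 h + f2 h) %% n == i)%N then c else 0.
Proof.
move=> h1 h2.
rewrite (eq_bigr (fun H => if H == mprod f1 f2 then c else 0)); last first.
  by move=> H /andP [hH _]; rewrite chprod_iff.
by rewrite sum_delta (mprod_dual h1 h2) /= -(inj_eq val_inj) /= mprod_h.
Qed.

Lemma gmul_sum a b i :
  \sum_(H in D | H h == i) gmul z sigma a b H =
  \sum_(f1 in D) \sum_(f2 in D)
     (if ((f1 h + f2 h) %% n == i)%N then a f1 * b f2 else 0).
Proof.
rewrite (eq_bigr (fun H => \sum_(f1 in D) \sum_(f2 in D)
     (if chprod z sigma f1 f2 H then a f1 * b f2 else 0))); last first.
  by move=> H /andP [hH _]; rewrite ffunE hH.
rewrite exchange_big /=; apply: eq_bigr => f1 h1.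
rewrite exchange_big /=; apply: eq_bigr => f2 h2.
by rewrite inner_sum.
Qed.

Lemma gmul_Ql a b : Qp a -> Qp (gmul z sigma a b).
Proof.
move=> ha i; rewrite gmul_sum exchange_big /=.
rewrite big1 // => f2 h2.
pose j := Ordinal (ltn_pmod (i + (n - f2 h)) (n_gt0 G)).
rewrite (eq_bigr (fun f1 : chtype n gT => if f1 h == j then a f1 * b f2 else 0)); last first.
  by move=> f1 _; rewrite mod_shift.
by rewrite -big_mkcondr -mulr_suml ha mul0r.
Qed.

Lemma gmul_Qr a b : Qp b -> Qp (gmul z sigma a b).
Proof.
move=> hb i; rewrite gmul_sum.
rewrite big1 // => f1 h1.
pose j := Ordinal (ltn_pmod (i + (n - f1 h)) (n_gt0 G)).
rewrite (eq_bigr (fun f2 : chtype n gT => if f2 h == j then a f1 * b f2 else 0)); last first.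
  by move=> f2 _; rewrite addnC mod_shift.
by rewrite -big_mkcondr -mulr_sumr hb mulr0.
Qed.

Lemma bigQ (s : seq {set chtype n gT}) (P : pred {set chtype n gT}) F A0 :
  A0 \in s -> P A0 -> Qp (F A0) ->
  Qp (\big[gmul z sigma/gone n z sigma]_(A <- s | P A) F A).
Proof.
move=> hA0 hP hF; elim: s hA0 => // x s IH; rewrite inE big_cons => /orP [/eqP <-|hs].
  by rewrite hP; apply: gmul_Ql.
by case: (P x); [apply: gmul_Qr|]; apply: IH.
Qed.

Definition f0 : chtype n gT := mk G sigma g 0.

Lemma f0_dual : f0 \in D.
Proof. by apply: (mk_dual hz hg); rewrite muln0 dvdn0. Qed.

Lemma f0_val x : val (f0 x) = 0%N.
Proof. by rewrite ffunE; case: ifP => //= _; rewrite muln0 mod0n. Qed.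

Lemma chtriv_iff f : f \in D -> chtriv z sigma f = (f == f0).
Proof.
move=> fD; apply/forallP/eqP => [hc|-> x].
  apply: (dual_eq hz fD f0_dual) => x hx.
  by have /implyP /(_ hx) /eqP -> := hc x; rewrite /chi f0_val expr0.
by apply/implyP => _; rewrite /chi f0_val expr0.
Qed.

Lemma factor_Q (A : {set chtype n gT}) : A \subset D -> (forall f, f \in A -> val (f h) = 0%N) ->
  (0 < #|A|)%N -> Qp (gsub (gone n z sigma) (gscale (#|A|%:R)^-1 (gsum A))).
Proof.
move=> AD A0 Apos i.
rewrite (eq_bigr (fun f => (if f == f0 then 1 else 0) -
   (#|A|%:R)^-1 * \sum_(x in A) (if f == x then 1 else 0))); last first.
  by move=> f /andP [fD _]; rewrite !ffunE fD /= chtriv_iff //; congr (_ - _ * _);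
     apply: eq_bigr => x _; rewrite ffunE.
rewrite sumrB -mulr_sumr exchange_big /= sum_delta f0_dual /=.
rewrite (eq_bigr (fun x => if (0 == i)%N then 1 else 0)); last first.
  move=> x xA; rewrite sum_delta (subsetP AD _ xA) /= -(inj_eq val_inj) /= A0 //.
have -> : (f0 h == i) = (0 == i)%N by rewrite -(inj_eq val_inj) /= f0_val.
rewrite sumr_const; case: (0 == i)%N; last by rewrite mul0rn mulr0 subr0.
by rewrite mulVf ?subrr // Num.Theory.pnatr_eq0 -lt0n.
Qed.

End EprimTh.
Section EprimTh2.
Variables (l0 : fieldType) (z : l0) (gT : finGroupType) (G sigma : {group gT}) (g : gT).
Hypothesis hz : #|G|.-primitive_root z.
Hypothesis hsG : sigma \subset G.
Hypothesis hg : (sigma : {set gT}) = <[g]>%g.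
Variables (h : gT) (r : nat).
Hypothesis hr : h = (g ^+ r)%g.
Hypothesis hlt : (#[h]%g < #[g]%g)%N.

Local Notation n := #|G|.
Local Notation D := (dual n z sigma).
Local Notation d := #[g]%g.

Lemma hh : h \in sigma. Proof. by rewrite hr groupX // (g_in hg). Qed.

Definition Kset : {set chtype n gT} := [set f in D | val (f h) == 0%N].

Lemma K_subgrp : is_subgrp z sigma Kset.
Proof.
apply/and3P; split.
- by apply/subsetP => f; rewrite inE => /andP [].
- apply/existsP; exists (f0 G sigma g); rewrite inE (f0_dual hz hg) f0_val /=.
  by rewrite (chtriv_iff hz hg) ?(f0_dual hz hg).
apply/forallP => f1; apply/implyP; rewrite inE => /andP [d1 v1].
apply/forallP => f2; apply/implyP; rewrite inE => /andP [d2 v2].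
apply/forallP => H; apply/implyP => hH; apply/implyP.
rewrite (chprod_iff hz) // => /eqP ->; rewrite inE (mprod_dual hz) //=.
have := mprod_h hh f1 f2; rewrite /= => ->.
by move: v1 v2 => /= /eqP -> /eqP ->; rewrite mod0n.
Qed.

Lemma K_nontriv : nontriv z sigma Kset.
Proof.
pose f1 := phi G sigma (Ordinal hlt).
have f1D : f1 \in D by apply: (phi_dual hz hsG hg).
have hw := w_prim hz hsG hg.
apply/existsP; exists f1; rewrite inE f1D /=; apply/andP; split.
  have : chi z f1 h = 1.
    rewrite hr (dual_X hz hg) // (phi_g hz hsG hg) /= -exprM; apply/eqP.
    by rewrite -(prim_order_dvd hw) order_dvdn /= mulnC expgM -hr expg_order eqxx.
  rewrite -[1](expr0 z) => /(zinj hz (b := Ordinal (n_gt0 G))) ->; done.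
rewrite (chtriv_iff hz hg) //; apply/eqP => hf.
have := phi_g hz hsG hg (Ordinal hlt); rewrite -/f1 hf /chi f0_val expr0 /=.
move/eqP; rewrite eq_sym -(prim_order_dvd hw) => hdv.
have := dvdn_leq (order_gt0 h) hdv; rewrite leqNgt hlt //.
Qed.

Lemma A0_exists : exists A0, min_nontriv z sigma A0 /\ A0 \subset Kset.
Proof.
pose Pm (B : {set chtype n gT}) := [&& is_subgrp z sigma B, nontriv z sigma B & B \subset Kset].
have PK : Pm Kset by rewrite /Pm K_subgrp K_nontriv subxx.
case: (arg_minnP (fun B : {set chtype n gT} => #|B|) PK) => A0 /and3P [s0 n0 k0] hmin.
exists A0; split => //; apply/and3P; split => //.
apply/forallP => B; apply/implyP => /and3P [sB nB BA].
rewrite eqEcard BA hmin //= /Pm sB nB (subset_trans BA k0) //.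
Qed.

Lemma eprim_Q : Qp z sigma h (eprim n z sigma).
Proof.
have [A0 [m0 k0]] := A0_exists.
apply: (bigQ hz hh (A0 := A0)) => //; first exact: mem_index_enum.
apply: (factor_Q hz hg).
- by apply: (subset_trans k0); apply/subsetP => f; rewrite inE => /andP [].
- by move=> ff hf; have := subsetP k0 ff hf; rewrite inE => /andP [_ /eqP].
- case/and3P: m0 => _ /existsP [f1 /andP [fA _]] _; apply/card_gt0P; by exists f1.
Qed.

End EprimTh2.
Unset Implicit Arguments.
Theorem lemma4p5 (k l0 : fieldType) (iota : {rmorphism k -> l0}) (z : l0)
  (gT : finGroupType) (G sigma sigma' : {group gT})
  (hn : (#|G|%:R : k) != 0)
  (hsG : sigma \subset G) (hcyc : cyclic sigma)
  (hz : #|G|.-primitive_root z)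
  (hl0 : forall x : l0, exists p : {poly k}, x = (map_poly iota p).[z])
  (hprop : sigma' \proper sigma)
  (m dV dW : nat) (V : mx_representation k sigma dV) (W : mx_representation k sigma dW)
  (hrep : forall f, f \in dual #|G| z sigma ->
     ((mult z (map_repr iota V) f)%:R - (mult z (map_repr iota W) f)%:R : rat)
       = (#|G| ^ m)%:R * eprim #|G| z sigma f) :
  mx_rsim (subg_repr V (proper_sub hprop)) (subg_repr W (proper_sub hprop)).
Proof.
have [g hg] := cyclicP hcyc.
have [h hh'] := cyclicP (cyclicS (proper_sub hprop) hcyc).
have hs' : h \in sigma' by rewrite hh' cycle_id.
have hs : h \in sigma by apply: (subsetP (proper_sub hprop)).
have [r hr] : exists r, h = (g ^+ r)%g by apply/cycleP; rewrite -hg.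
have hlt : (#[h]%g < #[g]%g)%N by rewrite !orderE -hh' -hg proper_card.
set e := #[h]%g.
have he : (e%:R : k) != 0.
  apply: contraNneq hn => he0.
  have hG : h \in G by apply: (subsetP hsG).
  by rewrite -(divnK (order_dvdG hG)) natrM he0 mulr0.
pose VL := map_repr iota V; pose WL := map_repr iota W.
have hQ := eprim_Q hz hsG hg hr hlt.
have hinner (i : 'I_#|G|) : (\sum_(f in dual #|G| z sigma | f h == i) mult z VL f =
                   \sum_(f in dual #|G| z sigma | f h == i) mult z WL f)%N.
  apply/eqP; rewrite -(Num.Theory.eqr_nat rat) -subr_eq0 !natr_sum -sumrB.
  rewrite (eq_bigr (fun f => (#|G| ^ m)%:R * eprim #|G| z sigma f)); last first.
    by move=> f /andP [fD _]; rewrite hrep.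
  by rewrite -mulr_sumr hQ mulr0.
have hker (P : {poly l0}) : \rank (kermxpoly (VL h) P) = \rank (kermxpoly (WL h) P).
  rewrite (EQ hz hsG hg VL P hr) (EQ hz hsG hg WL P hr).
  by apply: eq_bigr => i _; apply: hinner.
have hdim : dV = dW.
  have h1 := rank_ker_peval (VL h) 0; have h2 := rank_ker_peval (WL h) 0.
  rewrite peval0 mxrank0 addn0 in h1; rewrite peval0 mxrank0 addn0 in h2.
  by have := hker 0; rewrite h1 h2.
have hrk q : \rank (peval (V h) q) = \rank (peval (W h) q).
  rewrite -(mxrank_map iota (peval (V h) q)) -(mxrank_map iota (peval (W h) q)).
  rewrite !map_peval.
  apply/eqP; rewrite -(eqn_add2l (\rank (kermxpoly (WL h) (map_poly iota q)))).
  have hV := rank_ker_peval (VL h) (map_poly iota q).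
  have hW := rank_ker_peval (WL h) (map_poly iota q).
  rewrite hker in hV.
  rewrite [X in (_ + X == _)%N](_ : _ = \rank (peval (VL h) (map_poly iota q))) //.
  rewrite [X in (_ == _ + X)%N](_ : _ = \rank (peval (WL h) (map_poly iota q))) //.
  by rewrite hV hW hdim.
have hpow (dX : nat) (X : mx_representation k sigma dX) : (X h) ^+ e = 1.
  by rewrite -repr_pow // expg_order repr_mx1.
have [B [eB fB hB]] := sim_criterion he (leqnn dV) (hpow _ V) (hpow _ W) hrk.
exists B => // x hx; have /cycleP [i ->] : x \in <[h]>%g by rewrite -hh'.
rewrite /=.
rewrite !repr_pow //.
by symmetry; apply: powsim; rewrite hB.
Qed.
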